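(* Let $f:[0,1]\to\mathbb{R}$ be bounded and let $0<b<1$. Assume that $f(t)=c$ for all $t\in[0,b)$, for some real constant $c$. Then for every $n\in\mathbb{N}$ and every $x\in(0,b)$, \[ |B_nf(x)-f(x)|\leq \|f-c\|\,e^{-nr(x,b)}. \]
   Context: For a bounded function $f:[0,1]\to\mathbb{R}$, $\|f\|=\sup_{t\in[0,1]}|f(t)|$, and $\|f-c\|$ is the supremum norm of $t\mapsto f(t)-c$. The $n$th Bernstein polynomial of $f$ is $B_nf(x)=\sum_{j=0}^n f(j/n)\binom{n}{j}x^j(1-x)^{n-j}$, $x\in[0,1]$. For $x,\theta\in(0,1)$, $r(x,\theta)=\theta\log\frac{\theta}{x}+(1-\theta)\log\frac{1-\theta}{1-x}$. *)

(* Defs.v *)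
From HB Require Import structures.
From mathcomp Require Import all_boot all_order all_algebra.
From mathcomp Require Import all_classical all_reals all_analysis.
Set Implicit Arguments. Unset Strict Implicit. Unset Printing Implicit Defensive.
Import Order.TTheory GRing.Theory Num.Theory.
Local Open Scope classical_set_scope.
Local Open Scope ring_scope.

Definition bernstein {R : realType} (n : nat) (f : R -> R) (x : R) : R :=
  \sum_(j < n.+1) f (j%:R / n%:R) * ('C(n, j))%:R * x ^+ j * (1 - x) ^+ (n - j).

Definition supnorm_shift {R : realType} (f : R -> R) (c : R) : R :=
  sup [set `|f t - c| | t in `[0, 1]].

Definition rent {R : realType} (x theta : R) : R :=
  theta * ln (theta / x) + (1 - theta) * ln ((1 - theta) / (1 - x)).

(* Main.v *)
Require Import Defs.
From HB Require Import structures.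
From mathcomp Require Import all_boot all_order all_algebra.
From mathcomp Require Import all_classical all_reals all_analysis.
From mathcomp Require Import lra ring.
Import Order.TTheory GRing.Theory Num.Theory.
Local Open Scope classical_set_scope.
Local Open Scope ring_scope.

Lemma jn01 (R : realType) {n : nat} (j : 'I_n.+1) :
  0 <= (j%:R / n%:R : R) <= 1.
Proof.
apply/andP; split; first by apply: divr_ge0.
have hj : (j <= n)%N by rewrite -ltnS.
case: n j hj => [|n] j hj; first by rewrite invr0 mulr0.
by rewrite ler_pdivrMr ?ltr0n // mul1r ler_nat.
Qed.

Theorem corollary1 (R : realType) (f : R -> R) (b c : R) :
  (exists M : R, forall t, 0 <= t <= 1 -> `|f t| <= M) ->
  0 < b -> b < 1 ->
  (forall t, 0 <= t < b -> f t = c) ->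
  forall (n : nat) (x : R), 0 < x < b ->
    `|bernstein n f x - f x| <= supnorm_shift f c * expR (- (n%:R * rent x b)).
Proof.
move=> [M hM] b0 b1 hc n x /andP[x0 xb].
set S := supnorm_shift f c.
have hS : forall t, 0 <= t <= 1 -> `|f t - c| <= S.
  move=> t ht; apply: ub_le_sup; last by exists t.
  exists (M + `|c|) => _ [u hu <-].
  apply: (le_trans (ler_normB _ _)); rewrite lerD2r; apply: hM.
  by move: hu; rewrite /= in_itv /=.
have S0 : 0 <= S by apply: le_trans (hS 0 _); rewrite ?normr_ge0 ?lexx ?ler01.
have fx : f x = c by apply: hc; rewrite ltW.
set A := ln (b / x).
set B := ln ((1 - x) / (1 - b)).
set lam := A + B.
have x1 : x < 1 by apply: lt_trans b1.
have eA : expR A = b / x by rewrite lnK // posrE divr_gt0.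
have eB : expR B = (1 - x) / (1 - b) by rewrite lnK // posrE divr_gt0 ?subr_gt0.
have lam0 : 0 <= lam.
  apply: addr_ge0; apply/ltW/ln_gt0.
    by rewrite ltr_pdivlMr // mul1r.
  by rewrite ltr_pdivlMr ?subr_gt0 // mul1r; lra.
have erent : rent x b = b * A - (1 - b) * B.
  rewrite /rent.
  have -> : ln ((1 - b) / (1 - x)) = - B.
    by rewrite /B -lnV ?invf_div // posrE divr_gt0 ?subr_gt0.
  by rewrite /A mulrN.
set p := fun (j : 'I_n.+1) => ('C(n, j))%:R * x ^+ j * (1 - x) ^+ (n - j).
have p0 : forall j, 0 <= p j.
  move=> j; rewrite /p; apply: mulr_ge0; [apply: mulr_ge0 => //; exact: exprn_ge0 (ltW x0) | by apply: exprn_ge0; rewrite subr_ge0 ltW].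
have sum1 : \sum_(j < n.+1) p j = 1.
  have := exprDn (1 - x) x n; rewrite subrK expr1n => ->.
  by apply: eq_bigr => i _; rewrite /p -mulr_natl; ring.
have eq1 : bernstein n f x - f x = \sum_(j < n.+1) (f (j%:R / n%:R) - c) * p j.
  rewrite fx /bernstein.
  transitivity (\sum_(j < n.+1) f (j%:R / n%:R) * p j - c * \sum_(j < n.+1) p j).
    by rewrite sum1 mulr1; congr (_ - _); apply: eq_bigr => j _; rewrite /p; ring.
  by rewrite mulr_sumr -sumrB; apply: eq_bigr => j _; ring.
set K := expR (- (lam * b * n%:R)).
have key : forall j : 'I_n.+1, `|(f (j%:R / n%:R) - c) * p j|
    <= S * K * (('C(n, j))%:R * (x * expR lam) ^+ j * (1 - x) ^+ (n - j)).
  move=> j.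
  have RHS0 : 0 <= S * K * (('C(n, j))%:R * (x * expR lam) ^+ j * (1 - x) ^+ (n - j)).
    by rewrite !mulr_ge0 ?expR_ge0 // ?exprn_ge0 ?mulr_ge0 ?expR_ge0 // ?subr_ge0 ltW.
  have [jlt|jge] := ltP (j%:R / n%:R : R) b.
    rewrite hc ?subrr ?mul0r ?normr0 //.
    by rewrite jlt andbT divr_ge0.
  have n0 : (0 < n)%N.
    case: n j jge {K RHS0 p p0 sum1 eq1} => [|n] j jge //.
    by move: jge; rewrite invr0 mulr0 => /(lt_le_trans b0); rewrite ltxx.
  have bn : b * n%:R <= j%:R by rewrite -ler_pdivlMr ?ltr0n.
  have K1 : 1 <= K * expR lam ^+ j.
    rewrite /K -expRM_natl -expRD.
    apply: le_trans (expR_ge1Dx _); rewrite lerDl.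
    have -> : - (lam * b * n%:R) + j%:R * lam = lam * (j%:R - b * n%:R) by ring.
    by apply: mulr_ge0 => //; rewrite subr_ge0.
  rewrite normrM (ger0_norm (p0 j)).
  have h1 := hS _ (jn01 R j).
  have e : S * K * (('C(n, j))%:R * (x * expR lam) ^+ j * (1 - x) ^+ (n - j))
      = S * p j * (K * expR lam ^+ j) by rewrite /p exprMn; ring.
  rewrite e.
  have K1' : 0 <= K * expR lam ^+ j - 1 by rewrite subr_ge0.
  have := mulr_ge0 (mulr_ge0 S0 (p0 j)) K1'.
  have := p0 j; have := normr_ge0 (f (j%:R / n%:R) - c).
  move: (S) (p j) (K * expR lam ^+ j) (`|f (j%:R / n%:R) - c|) h1 => s q k a H1 H2 H3 H4.
  nra.
have sumE : \sum_(j < n.+1) (('C(n, j))%:R * (x * expR lam) ^+ j * (1 - x) ^+ (n - j))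
    = expR B ^+ n.
  have hB : x * expR lam + (1 - x) = expR B.
    rewrite /lam expRD eA eB; field.
    by apply/andP; split; rewrite ?subr_eq0 gt_eqF.
  rewrite -hB (addrC (x * expR lam)) exprDn.
  by apply: eq_bigr => i _; rewrite -[in RHS]mulr_natl; ring.
rewrite eq1; apply: le_trans (ler_norm_sum _ _ _) _.
apply: le_trans (ler_sum _ (fun j _ => key j)) _.
rewrite -mulr_sumr sumE -mulrA; apply: (ler_wpM2l S0).
rewrite /K -expRM_natl -expRD erent.
rewrite [X in X <= _](_ : _ = expR (- (n%:R * (b * A - (1 - b) * B)))) //.
by congr expR; rewrite /lam; ring.
Qed.
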